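(* Let $(M^{2m},g,I,J)$ be a generalized Kähler manifold with $\det(I+J)\neq0$ everywhere, and let $b:=-g(I+J)^{-1}(I-J)$, i.e. $b(X,Y)=-g((I+J)^{-1}(I-J)X,Y)$, which is a 2-form of type $(2,0)+(0,2)$ with respect to both $I$ and $J$. Then for every vector $X$, $$d\big(\log\det(I+J)\big)(X)=-2\langle b,\iota_XH\rangle_g,$$ where $H=d^c_I\omega_I$.
   Context: Conventions: $\omega_I(X,Y):=g(IX,Y)$, $d^c_I:=\sqrt{-1}(\bar\partial_I-\partial_I)$. A generalized Kähler structure $(g,I,J)$: integrable $I,J$, $g$ Hermitian for both, with $d^c_I\omega_I=H=-d^c_J\omega_J$ and $dH=0$. The inner product on 2-forms is the standard one induced by $g$ (for which $e^i\wedge e^j$, $i<j$, are orthonormal for a $g$-orthonormal coframe). *)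

(* Defs.v *)
(* Local (coordinate) model of a generalized Kähler manifold: an open subset
   U of R^(2m), vectors are row vectors 'rV[R]_(2m), endomorphism fields are
   matrix-valued functions acting on row vectors by right multiplication. *)
From HB Require Import structures.
From mathcomp Require Import all_boot all_order all_algebra.
From mathcomp Require Import all_classical all_reals all_analysis.
Set Implicit Arguments.
Unset Strict Implicit.
Unset Printing Implicit Defensive.
Import Order.TTheory GRing.Theory Num.Theory.
Import numFieldNormedType.Exports.
Local Open Scope ring_scope.
Local Open Scope classical_set_scope.

Section GK.
Variables (R : realType) (n : nat).
Local Notation V := 'rV[R]_n.

Definition app (A : 'M[R]_n) (X : V) : V := X *m A.

Definition bil (G : 'M[R]_n) (X Y : V) : R := (X *m G *m Y^T) 0 0.

Definition evec (i : 'I_n) : V := delta_mx 0 i.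

Definition Dm (F : V -> 'M[R]_n) (v x : V) : 'M[R]_n :=
  \matrix_(i, j) derive (fun y => F y i j) x v.

Fixpoint iterD (vs : seq V) (f : V -> R) : V -> R :=
  match vs with
  | [::] => f
  | v :: vs' => fun x => derive (iterD vs' f) x v
  end.

Definition smooth_on (U : set V) (f : V -> R) : Prop :=
  forall (vs : seq V) (x : V), U x -> differentiable (iterD vs f) x.

Definition smooth_mx_on (U : set V) (F : V -> 'M[R]_n) : Prop :=
  forall i j, smooth_on U (fun y => F y i j).

(* Nijenhuis tensor of the endomorphism field I at x, evaluated on X, Y
   (computed with constant vector fields X, Y, whose brackets vanish):
   N(X,Y) = [IX,IY] - I[IX,Y] - I[X,IY] - [X,Y]. *)
Definition nijenhuis (I : V -> 'M[R]_n) (x X Y : V) : V :=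
  app (Dm I (app (I x) X) x) Y - app (Dm I (app (I x) Y) x) X
  + app (I x) (app (Dm I Y x) X) - app (I x) (app (Dm I X x) Y).

Definition form (p : nat) := V -> ('I_p -> V) -> R.

(* exterior derivative, via the coordinate formula with constant vector
   fields: d a (X_0..X_p) = sum_i (-1)^i D_{X_i} (a (X_0,..,^X_i,..,X_p)) *)
Definition dform (p : nat) (a : form p) : form p.+1 :=
  fun x Xs => \sum_(i < p.+1)
    (-1) ^+ i * derive (fun y => a y (fun j => Xs (lift i j))) x (Xs i).

Definition form_act (p : nat) (A : V -> 'M[R]_n) (a : form p) : form p :=
  fun x Xs => a x (fun j => app (A x) (Xs j)).

(* d^c_I = sqrt(-1)(dbar_I - d_I) = I^{-1} d I on real forms *)
Definition dc (p : nat) (I : V -> 'M[R]_n) (a : form p) : form p.+1 :=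
  form_act (fun x => invmx (I x)) (dform (form_act I a)).

Definition pair2 (X Y : V) : 'I_2 -> V := fun k => if val k == 0%N then X else Y.

Definition omega (G I : V -> 'M[R]_n) : form 2 :=
  fun x Xs => bil (G x) (app (I x) (Xs ord0)) (Xs ord_max).

Definition contr (p : nat) (X : V) (a : form p.+1) : form p :=
  fun x Xs => a x (fun k : 'I_p.+1 => if unlift ord0 k is Some j then Xs j else X).

(* inner product of 2-forms induced by g:
   <a,b> = 1/2 sum g^{ik} g^{jl} a_{ij} b_{kl}
   (= sum_{i<j} a(f_i,f_j) b(f_i,f_j) for a g-orthonormal frame f). *)
Definition ip2 (G : 'M[R]_n) (a b : ('I_2 -> V) -> R) : R :=
  2^-1 * \sum_(i < n) \sum_(j < n) \sum_(k < n) \sum_(l < n)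
    invmx G i k * invmx G j l * a (pair2 (evec i) (evec j))
                              * b (pair2 (evec k) (evec l)).

Definition hermitian_cx_on (U : set V) (G I : V -> 'M[R]_n) : Prop :=
  smooth_mx_on U I /\
  (forall x, U x -> I x *m I x = - 1%:M) /\
  (forall x X Y, U x -> nijenhuis I x X Y = 0) /\
  (forall x X Y, U x -> bil (G x) (app (I x) X) (app (I x) Y) = bil (G x) X Y).

Definition riemannian_on (U : set V) (G : V -> 'M[R]_n) : Prop :=
  smooth_mx_on U G /\
  (forall x, U x -> (G x)^T = G x) /\
  (forall x X, U x -> X != 0 -> 0 < bil (G x) X X).

Definition gen_kahler_on (U : set V) (G I J : V -> 'M[R]_n) : Prop :=
  open U /\ riemannian_on U G /\ hermitian_cx_on U G I /\ hermitian_cx_on U G J /\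
  (forall x Xs, U x -> dc I (omega G I) x Xs = - dc J (omega G J) x Xs) /\
  (forall x Xs, U x -> dform (dc I (omega G I)) x Xs = 0).

Definition bform (G I J : V -> 'M[R]_n) : form 2 :=
  fun x Xs => - bil (G x) (app (invmx (I x + J x)) (app (I x - J x) (Xs ord0)))
                          (Xs ord_max).

End GK.

(* Main.v *)
Require Import Defs.
From HB Require Import structures.
From mathcomp Require Import all_boot all_order all_algebra.
From mathcomp Require Import all_classical all_reals all_analysis.
From mathcomp Require Import fingroup perm.
From mathcomp Require Import polyrcf.
From mathcomp Require Import ring lra.
Import Order.TTheory GRing.Theory Num.Theory.
Import numFieldNormedType.Exports.
Local Open Scope ring_scope.
Local Open Scope classical_set_scope.

Set Implicit Arguments.
Unset Strict Implicit.
Section DerLib.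
Variables (R : realType) (n : nat).
Local Notation V := 'rV[R]_n.

Lemma der_sum_seq (I : Type) (r : seq I) (P : pred I) (f : I -> V -> R) (x v : V) :
  (forall i, derivable (f i) x v) ->
  derivable (fun y => \sum_(i <- r | P i) f i y) x v /\
  derive (fun y => \sum_(i <- r | P i) f i y) x v = \sum_(i <- r | P i) derive (f i) x v.
Proof.
move=> df; elim: r => [|a r [IH1 IH2]].
  under eq_fun do rewrite big_nil.
  by rewrite big_nil; split; [exact: derivable_cst | exact: derive_cst].
under eq_fun do rewrite big_cons.
rewrite big_cons; case: (P a).
  have -> : (fun y => f a y + \sum_(j <- r | P j) f j y) = f a + (fun y => \sum_(j <- r | P j) f j y) by [].
  by split; [exact: derivableD | rewrite deriveD // IH2].
by [].
Qed.

Lemma der_prod m (f : 'I_m -> V -> R) (x v : V) :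
  (forall i, derivable (f i) x v) ->
  derivable (fun y => \prod_i f i y) x v /\
  derive (fun y => \prod_i f i y) x v =
    \sum_i derive (f i) x v * \prod_(j | j != i) f j x.
Proof.
elim: m f => [|m IH] f df.
  under eq_fun do rewrite big_ord0.
  by rewrite big_ord0; split; [exact: derivable_cst | exact: derive_cst].
under eq_fun do rewrite big_ord_recr.
have [IH1 IH2] := IH (fun i => f (widen_ord (leqnSn m) i)) (fun i => df _).
have -> : (fun y => (\prod_(i < m) f (widen_ord (leqnSn m) i) y) * f ord_max y) =
   (fun y => \prod_(i < m) f (widen_ord (leqnSn m) i) y) * f ord_max by [].
split; first exact: derivableM.
rewrite deriveM // IH2 big_ord_recr /=.
have sE : forall a b : R, a *: b = a * b by [].
have wne : forall i : 'I_m, (widen_ord (leqnSn m) i != ord_max).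
  by move=> i; rewrite -val_eqE /= neq_ltn ltn_ord.
rewrite addrC !sE; congr (_ + _).
  rewrite mulrC; congr (_ * _).
  rewrite [RHS]big_mkcond big_ord_recr /= eqxx mulr1; apply: eq_bigr => i _.
  by rewrite wne.
rewrite mulr_sumr; apply: eq_bigr => i _.
rewrite mulrCA; congr (_ * _).
rewrite [RHS]big_mkcond big_ord_recr /=.
rewrite eq_sym wne mulrC; congr (_ * _).
rewrite big_mkcond; apply: eq_bigr => j _.
by rewrite -[widen_ord _ j == _]val_eqE /= val_eqE.
Qed.

Lemma der_cmul (c : R) (g : V -> R) (x v : V) :
  derivable g x v -> derivable (fun y => c * g y) x v /\
  derive (fun y => c * g y) x v = c * derive g x v.
Proof.
move=> dg.
have -> : (fun y => c * g y) = (cst c) * g by [].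
split; first by apply: derivableM => //; exact: derivable_cst.
rewrite deriveM //.
by rewrite derive_cst scaler0 addr0.
Qed.

Lemma der_det (M : V -> 'M[R]_n) (x v : V) :
  (forall i j, derivable (fun y => M y i j) x v) ->
  derivable (fun y => \det (M y)) x v /\
  derive (fun y => \det (M y)) x v = \tr (Dm M v x *m \adj (M x)).
Proof.
move=> dM.
have dT : forall s : 'S_n, derivable (fun y => (-1) ^+ s * \prod_i M y i (s i)) x v /\
   derive (fun y => (-1) ^+ s * \prod_i M y i (s i)) x v =
   (-1) ^+ s * \sum_i derive (fun y => M y i (s i)) x v * \prod_(j | j != i) M x j (s j).
  move=> s; have [d1 d2] := @der_prod n (fun i y => M y i (s i)) x v (fun i => dM _ _).
  have [e1 e2] := @der_cmul ((-1) ^+ odd_perm s) _ _ _ d1.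
  by split => //; rewrite e2 d2.
have [S1 S2] := @der_sum_seq _ (index_enum {perm 'I_n}) xpredT
   (fun s y => (-1) ^+ s * \prod_i M y i (s i)) x v (fun s => (dT s).1).
split; first exact S1.
transitivity (\sum_(s : {perm 'I_n}) 'D_v (fun y => (-1) ^+ s * \prod_i M y i (s i)) x); first exact S2.
under eq_bigr do rewrite (dT _).2 mulr_sumr.
rewrite exchange_big /= /mxtrace; apply: eq_bigr => i _.
rewrite mxE (partition_big (fun s : {perm 'I_n} => s i) xpredT) //=.
apply: eq_bigr => j _; rewrite !mxE expand_cofactor mulr_sumr.
apply: eq_big => // s /eqP <-.
rewrite mulrCA; congr (_ * (_ * _)).
by apply: eq_bigl => k; rewrite eq_sym.
Qed.


Lemma derive_dir (f : V -> R) (x v : V) :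
  derive f x v = derive (fun h : R => f (h *: v + x)) 0 1.
Proof.
rewrite /derive; set g1 := fun h => h^-1 *: _; set g2 := fun h => h^-1 *: _.
suff -> : g1 = g2 by [].
by rewrite funeqE /g1 /g2 => h /=; rewrite addr0 scale0r add0r [_%:A]mulr1.
Qed.

Lemma der_ln (f : V -> R) (x v : V) :
  derivable f x v -> 0 < f x ->
  derive (fun y => ln (f y)) x v = derive f x v / f x.
Proof.
move=> df fx0.
rewrite derive_dir (derive_dir f).
have d1 : derivable (fun h : R => f (h *: v + x)) 0 1 by exact: ((derivable1P f x v).1 df).
have e0 : (fun h : R => f (h *: v + x)) 0 = f x by rewrite /= scale0r add0r.
have dl : derivable (@ln R) ((fun h : R => f (h *: v + x)) 0) 1.
  by rewrite e0; exact: (@ex_derive _ _ _ _ _ _ _ (is_derive1_ln fx0)).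
have := derive1_comp d1 dl.
rewrite !derive1E /= => ->.
rewrite e0 (@derive_val _ _ _ _ _ _ _ (is_derive1_ln fx0)).
by rewrite mulrC.
Qed.


Definition dable (F : V -> 'M[R]_n) (x v : V) :=
  forall i j, derivable (fun y => F y i j) x v.

Lemma bilE (M : 'M[R]_n) (X Y : V) :
  bil M X Y = \sum_i \sum_j X 0 i * M i j * Y 0 j.
Proof.
rewrite /bil mxE exchange_big /=; apply: eq_bigr => j _.
by rewrite !mxE mulr_suml.
Qed.

Lemma der_bil (F : V -> 'M[R]_n) (X Y x v : V) : dable F x v ->
  derivable (fun y => bil (F y) X Y) x v /\
  derive (fun y => bil (F y) X Y) x v = bil (Dm F v x) X Y.
Proof.
move=> dF.
have e : (fun y => bil (F y) X Y) = (fun y => \sum_i \sum_j X 0 i * Y 0 j * F y i j).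
  apply: funext => y; rewrite bilE; apply: eq_bigr => i _; apply: eq_bigr => j _.
  by rewrite mulrAC.
have dij : forall i j, derivable (fun y => X 0 i * Y 0 j * F y i j) x v /\
   derive (fun y => X 0 i * Y 0 j * F y i j) x v = X 0 i * Y 0 j * derive (fun y => F y i j) x v.
  by move=> i j; apply: der_cmul.
have di : forall i, derivable (fun y => \sum_j X 0 i * Y 0 j * F y i j) x v /\
   derive (fun y => \sum_j X 0 i * Y 0 j * F y i j) x v = \sum_j X 0 i * Y 0 j * derive (fun y => F y i j) x v.
  move=> i; have [h1 h2] := @der_sum_seq _ (index_enum 'I_n) xpredT _ x v (fun j => (dij i j).1).
  by split => //; rewrite h2; apply: eq_bigr => j _; rewrite (dij i j).2.
have [h1 h2] := @der_sum_seq _ (index_enum 'I_n) xpredT _ x v (fun i => (di i).1).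
rewrite e; split => //; rewrite h2 bilE; apply: eq_bigr => i _.
rewrite (di i).2; apply: eq_bigr => j _; rewrite mxE; by rewrite mulrAC.
Qed.

Lemma Dm_mul (A B : V -> 'M[R]_n) (x v : V) : dable A x v -> dable B x v ->
  dable (fun y => A y *m B y) x v /\
  Dm (fun y => A y *m B y) v x = Dm A v x *m B x + A x *m Dm B v x.
Proof.
move=> dA dB.
have dk : forall i j k, derivable (fun y => A y i k * B y k j) x v /\
    derive (fun y => A y i k * B y k j) x v =
    derive (fun y => A y i k) x v * B x k j + A x i k * derive (fun y => B y k j) x v.
  move=> i j k.
  have -> : (fun y => A y i k * B y k j) = (fun y => A y i k) * (fun y => B y k j) by [].
  split; first exact: derivableM.
  by rewrite deriveM // addrC mulrC.
have dij : forall i j, derivable (fun y => (A y *m B y) i j) x v /\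
    derive (fun y => (A y *m B y) i j) x v = (Dm A v x *m B x + A x *m Dm B v x) i j.
  move=> i j.
  have -> : (fun y => (A y *m B y) i j) = (fun y => \sum_k A y i k * B y k j).
    by apply: funext => y; rewrite mxE.
  have [h1 h2] := @der_sum_seq _ (index_enum 'I_n) xpredT _ x v (fun k => (dk i j k).1).
  split => //; rewrite h2 !mxE -big_split /=; apply: eq_bigr => k _.
  by rewrite (dk i j k).2 !mxE.
split; first by move=> i j; exact: (dij i j).1.
by apply/matrixP => i j; rewrite mxE (dij i j).2.
Qed.

Lemma Dm_add (A B : V -> 'M[R]_n) (x v : V) : dable A x v -> dable B x v ->
  dable (fun y => A y + B y) x v /\
  Dm (fun y => A y + B y) v x = Dm A v x + Dm B v x.
Proof.
move=> dA dB.
have e : forall i j, (fun y => (A y + B y) i j) = (fun y => A y i j) + (fun y => B y i j).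
  by move=> i j; apply: funext => y; rewrite mxE.
split; first by move=> i j; rewrite e; apply: derivableD.
by apply/matrixP => i j; rewrite !mxE e deriveD.
Qed.

Lemma Dm_opp (A : V -> 'M[R]_n) (x v : V) : dable A x v ->
  dable (fun y => - A y) x v /\ Dm (fun y => - A y) v x = - Dm A v x.
Proof.
move=> dA.
have e : forall i j, (fun y => (- A y) i j) = - (fun y => A y i j).
  by move=> i j; apply: funext => y; rewrite mxE.
split; first by move=> i j; rewrite e; apply: derivableN.
by apply/matrixP => i j; rewrite !mxE e deriveN.
Qed.

Lemma Dm_tr (A : V -> 'M[R]_n) (x v : V) : dable A x v ->
  dable (fun y => (A y)^T) x v /\ Dm (fun y => (A y)^T) v x = (Dm A v x)^T.
Proof.
move=> dA.
have e : forall i j, (fun y => ((A y)^T) i j) = (fun y => A y j i).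
  by move=> i j; apply: funext => y; rewrite mxE.
split; first by move=> i j; rewrite e.
by apply/matrixP => i j; rewrite !mxE e.
Qed.

Lemma Dm_cst (C : 'M[R]_n) (x v : V) :
  dable (fun _ => C) x v /\ Dm (fun _ => C) v x = 0.
Proof.
split; first by move=> i j; exact: derivable_cst.
by apply/matrixP => i j; rewrite !mxE; exact: derive_cst.
Qed.

Lemma Dm_near (A B : V -> 'M[R]_n) (x v : V) :
  (\near x, A x = B x) -> Dm A v x = Dm B v x.
Proof.
move=> AB; apply/matrixP => i j; rewrite !mxE; apply: near_eq_derive.
by near=> y; rewrite (near AB y).
Unshelve. all: by end_near.
Qed.

Lemma dable_near (A B : V -> 'M[R]_n) (x v : V) :
  (\near x, A x = B x) -> dable A x v -> dable B x v.
Proof.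
move=> AB dA i j; apply: (near_eq_derivable _ (dA i j)).
by near=> y; rewrite (near AB y).
Unshelve. all: by end_near.
Qed.

Definition ddiff (F : V -> 'M[R]_n) (x : V) :=
  forall i j, differentiable (fun y => F y i j) x.

Lemma Dm_lin (F : V -> 'M[R]_n) (x : V) (a : R) (u w : V) : ddiff F x ->
  Dm F (a *: u + w) x = a *: Dm F u x + Dm F w x.
Proof.
move=> dF; apply/matrixP => i j; rewrite !mxE !deriveE //.
by rewrite linearD linearZ.
Qed.

End DerLib.

Unset Implicit Arguments.
Set Strict Implicit.

Lemma det_pos_of (R : realType) (n : nat) (P : 'M[R]_n) :
  (forall t : R, 0 < t -> \det (P + t%:M) != 0) -> \det P != 0 -> 0 < \det P.
Proof.
move=> Ht HP.
pose q := char_poly (- P).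
have qE : forall t, q.[t] = \det (P + t%:M).
  move=> t; rewrite /q /char_poly -horner_evalE -det_map_mx; congr (\det _).
  apply/matrixP => i j; rewrite !mxE /= horner_evalE hornerD hornerN hornerC opprK addrC; congr (_ + _).
  by case: (i == j); rewrite /= ?mulr1n ?mulr0n ?hornerX ?horner0.
have lc : lead_coef q = 1 by apply/eqP; exact: char_poly_monic.
have lq : 0 < lead_coef q by rewrite lc ltr01.
have [T HT] := poly_pinfty_gt_lc lq.
rewrite lt_neqAle eq_sym HP /=.
rewrite leNgt; apply/negP => dneg.
have hb : 0 <= Num.max T 0 by rewrite le_max lexx orbT.
have hq : q.[0] <= 0 <= q.[Num.max T 0].
  rewrite qE raddf0 addr0 (ltW dneg) /=.
  apply: le_trans (HT _ _); first by rewrite lc ler01.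
  by rewrite le_max lexx.
have [c /andP [c0 cb] rc] := poly_ivt hb hq.
move: rc; rewrite /root qE => /eqP e.
have [c00|cn0] := eqVneq c 0.
  by move: e; rewrite c00 raddf0 addr0 => e; move: HP; rewrite e eqxx.
have cp : 0 < c by rewrite lt_neqAle eq_sym cn0 c0.
by move: (Ht c cp); rewrite e eqxx.
Qed.

Section Bismut.
Variables (R : realType) (n : nat).
Local Notation V := 'rV[R]_n.
Variables (G0 I0 : 'M[R]_n) (DG DI : V -> 'M[R]_n).
Hypothesis hG : G0^T = G0.
Hypothesis hI2 : I0 *m I0 = - 1%:M.
Hypothesis hIG : I0 *m G0 *m I0^T = G0.
Hypothesis hlinI : forall (a : R) u w, DI (a *: u + w) = a *: DI u + DI w.
Hypothesis hlinG : forall (a : R) u w, DG (a *: u + w) = a *: DG u + DG w.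
Hypothesis hDGs : forall v, (DG v)^T = DG v.
Hypothesis hD2 : forall v, DI v *m I0 + I0 *m DI v = 0.
Hypothesis hD3 : forall v, DI v *m G0 *m I0^T + I0 *m DG v *m I0^T + I0 *m G0 *m (DI v)^T = DG v.
Hypothesis hN : forall X Y : V, Y *m DI (X *m I0) - X *m DI (Y *m I0)
   + X *m DI Y *m I0 - Y *m DI X *m I0 = 0.

Definition Aa v Y Z := bil (DI v *m G0) Y Z.
Definition Bb v Y Z := bil (DG v) Y Z.
Definition Ww v := DI v *m G0 + I0 *m DG v.
Definition dw P Q S := bil (Ww P) Q S - bil (Ww Q) P S + bil (Ww S) P Q.
Definition Hf X0 X1 X2 := dw (X0 *m (- I0)) (X1 *m (- I0)) (X2 *m (- I0)).
Definition cf X Y Z := 2^-1 * (Bb X Y Z + Bb Y X Z - Bb Z X Y).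

Lemma bilDl M (X X' Y : V) : bil M (X + X') Y = bil M X Y + bil M X' Y.
Proof. by rewrite /bil !mulmxDl mxE. Qed.
Lemma bilNl M (X Y : V) : bil M (- X) Y = - bil M X Y.
Proof. by rewrite /bil !mulNmx mxE. Qed.
Lemma bilDr M (X Y Y' : V) : bil M X (Y + Y') = bil M X Y + bil M X Y'.
Proof. by rewrite /bil linearD /= mulmxDr mxE. Qed.
Lemma bilNr M (X Y : V) : bil M X (- Y) = - bil M X Y.
Proof. by rewrite /bil linearN /= mulmxN mxE. Qed.
Lemma bilZl M a (X Y : V) : bil M (a *: X) Y = a * bil M X Y.
Proof. by rewrite /bil -!scalemxAl mxE. Qed.
Lemma bilZr M a (X Y : V) : bil M X (a *: Y) = a * bil M X Y.
Proof. by rewrite /bil linearZ /= -scalemxAr mxE. Qed.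
Lemma bilDm M M' (X Y : V) : bil (M + M') X Y = bil M X Y + bil M' X Y.
Proof. by rewrite /bil mulmxDr mulmxDl mxE. Qed.
Lemma bilNm M (X Y : V) : bil (- M) X Y = - bil M X Y.
Proof. by rewrite /bil mulmxN mulNmx mxE. Qed.
Lemma bil0m (X Y : V) : bil 0 X Y = 0.
Proof. by rewrite /bil mulmx0 mul0mx mxE. Qed.
Lemma bilMl M N (X Y : V) : bil (M *m N) X Y = bil N (X *m M) Y.
Proof. by rewrite /bil !mulmxA. Qed.
Lemma bilMr M N (X Y : V) : bil (M *m N^T) X Y = bil M X (Y *m N).
Proof. by rewrite /bil trmx_mul !mulmxA. Qed.
Lemma bil_tr M (X Y : V) : bil M^T X Y = bil M Y X.
Proof.
rewrite /bil; have -> : Y *m M *m X^T = (X *m M^T *m Y^T)^T.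
  by rewrite !trmx_mul !trmxK mulmxA.
by rewrite [RHS]mxE.
Qed.

Lemma DI0 : DI 0 = 0.
Proof.
have h := hlinI 1 0 0; rewrite scale1r !addr0 scale1r in h.
by apply: (addrI (DI 0)); rewrite addr0 -h.
Qed.
Lemma DG0 : DG 0 = 0.
Proof.
have h := hlinG 1 0 0; rewrite scale1r !addr0 scale1r in h.
by apply: (addrI (DG 0)); rewrite addr0 -h.
Qed.
Lemma DIN v : DI (- v) = - DI v.
Proof. by have := hlinI (-1) v 0; rewrite addr0 DI0 addr0 !scaleN1r. Qed.
Lemma DGN v : DG (- v) = - DG v.
Proof. by have := hlinG (-1) v 0; rewrite addr0 DG0 addr0 !scaleN1r. Qed.

Lemma mxII (Y : V) : Y *m I0 *m I0 = - Y.
Proof. by rewrite -mulmxA hI2 mulmxN mulmx1. Qed.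

Lemma AN1 v Y Z : Aa (- v) Y Z = - Aa v Y Z.
Proof. by rewrite /Aa DIN mulNmx bilNm. Qed.
Lemma AN2 v Y Z : Aa v (- Y) Z = - Aa v Y Z.
Proof. by rewrite /Aa bilNl. Qed.
Lemma AN3 v Y Z : Aa v Y (- Z) = - Aa v Y Z.
Proof. by rewrite /Aa bilNr. Qed.
Lemma BN1 v Y Z : Bb (- v) Y Z = - Bb v Y Z.
Proof. by rewrite /Bb DGN bilNm. Qed.
Lemma BN2 v Y Z : Bb v (- Y) Z = - Bb v Y Z.
Proof. by rewrite /Bb bilNl. Qed.
Lemma BN3 v Y Z : Bb v Y (- Z) = - Bb v Y Z.
Proof. by rewrite /Bb bilNr. Qed.

Lemma IG : I0 *m G0 = - (G0 *m I0^T).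
Proof. by rewrite -{1}hIG !mulmxA hI2 !mulNmx !mul1mx. Qed.

Lemma WE v Y Z : bil (Ww v) Y Z = Aa v Y Z + Bb v (Y *m I0) Z.
Proof. by rewrite /Ww bilDm [bil (I0 *m _) _ _]bilMl. Qed.

Lemma r2 v Y Z : Aa v (Y *m I0) Z = Aa v Y (Z *m I0).
Proof.
have e : DI v *m G0 *m I0^T = - (DI v *m I0 *m G0).
  by rewrite -mulmxA -[G0 *m I0^T]opprK -IG mulmxN mulmxA.
rewrite /Aa -bilMl -bilMr e bilNm mulmxA; apply/eqP; rewrite -subr_eq0 opprK.
by rewrite -bilDm -mulmxDl [I0 *m _ + _]addrC hD2 mul0mx bil0m.
Qed.

Lemma r3 v Y Z : Aa v Y (Z *m I0) + Bb v (Y *m I0) (Z *m I0) + Aa v Z (Y *m I0) = Bb v Y Z.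
Proof.
have t3 : bil G0 (Y *m I0) (Z *m DI v) = Aa v Z (Y *m I0).
  by rewrite /Aa bilMl -{1}hG bil_tr.
rewrite [RHS]/Bb -(hD3 v) !bilDm !bilMr [bil (I0 *m DG v) _ _]bilMl.
by rewrite [bil (I0 *m G0) _ _]bilMl t3.
Qed.

Lemma bil0l M (Y : V) : bil M 0 Y = 0.
Proof. by rewrite /bil !mul0mx mxE. Qed.

Lemma rN X Y Z : Aa (X *m I0) Y Z - Aa (Y *m I0) X Z - Aa Y X (Z *m I0) + Aa X Y (Z *m I0) = 0.
Proof.
have key : forall (v P : V), bil G0 (P *m DI v *m I0) Z = - Aa v P (Z *m I0).
  move=> v P; rewrite -mulmxA -bilMl -mulmxA IG mulmxN bilNm mulmxA bilMr //.
have key2 : forall v P, bil G0 (P *m DI v) Z = Aa v P Z by move=> v P; rewrite /Aa bilMl.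
have := congr1 (fun M => bil G0 M Z) (hN X Y).
rewrite /= !bilDl !bilNl !key !key2 bil0l.
lra.
Qed.

Lemma bismut X Y Z : Aa X Y Z =
  2^-1 * (Hf X (Y *m I0) Z + Hf X Y (Z *m I0)) - cf X (Y *m I0) Z - cf X Y (Z *m I0).
Proof.
have h1 := r2 X Y (Z *m I0).
have h2 := rN X Y (Z *m I0).
have h3 := r3 X (Y *m I0) Z.
have h4 := rN X (Y *m I0) Z.
have h5 := r3 (X *m I0) Y Z.
have h6 := rN (X *m I0) Y Z.
have h7 := rN (X *m I0) Z Y.
rewrite /Hf /dw /cf !WE !mulmxN in h1 h2 h3 h4 h5 h6 h7 *.
rewrite ?mulNmx ?mxII ?opprK ?AN1 ?AN2 ?AN3 ?BN1 ?BN2 ?BN3 ?opprK in h1 h2 h3 h4 h5 h6 h7 *.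
rewrite ?mulNmx ?mxII ?opprK ?AN1 ?AN2 ?AN3 ?BN1 ?BN2 ?BN3 ?opprK in h1 h2 h3 h4 h5 h6 h7 *.
lra.
Qed.

Lemma bilZm M a (X Y : V) : bil (a *: M) X Y = a * bil M X Y.
Proof. by rewrite /bil -scalemxAr -scalemxAl mxE. Qed.

Lemma ALin1 a u w Y Z : Aa (a *: u + w) Y Z = a * Aa u Y Z + Aa w Y Z.
Proof. by rewrite /Aa hlinI mulmxDl -scalemxAl bilDm bilZm. Qed.
Lemma ALin2 a v Y Y' Z : Aa v (a *: Y + Y') Z = a * Aa v Y Z + Aa v Y' Z.
Proof. by rewrite /Aa bilDl bilZl. Qed.
Lemma ALin3 a v Y Z Z' : Aa v Y (a *: Z + Z') = a * Aa v Y Z + Aa v Y Z'.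
Proof. by rewrite /Aa bilDr bilZr. Qed.
Lemma BLin1 a u w Y Z : Bb (a *: u + w) Y Z = a * Bb u Y Z + Bb w Y Z.
Proof. by rewrite /Bb hlinG bilDm bilZm. Qed.
Lemma BLin2 a v Y Y' Z : Bb v (a *: Y + Y') Z = a * Bb v Y Z + Bb v Y' Z.
Proof. by rewrite /Bb bilDl bilZl. Qed.
Lemma BLin3 a v Y Z Z' : Bb v Y (a *: Z + Z') = a * Bb v Y Z + Bb v Y Z'.
Proof. by rewrite /Bb bilDr bilZr. Qed.

Lemma Bsym v Y Z : Bb v Y Z = Bb v Z Y.
Proof. by rewrite /Bb -{1}hDGs bil_tr. Qed.

Lemma HfE X0 X1 X2 : Hf X0 X1 X2 =
  - (Aa (X0 *m I0) (X1 *m I0) (X2 *m I0) - Bb (X0 *m I0) X1 (X2 *m I0)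
     - Aa (X1 *m I0) (X0 *m I0) (X2 *m I0) + Bb (X1 *m I0) X0 (X2 *m I0)
     + Aa (X2 *m I0) (X0 *m I0) (X1 *m I0) - Bb (X2 *m I0) X0 (X1 *m I0)).
Proof.
rewrite /Hf /dw !WE !mulmxN.
rewrite ?mulNmx ?mxII ?opprK ?AN1 ?AN2 ?AN3 ?BN1 ?BN2 ?BN3 ?opprK.
rewrite ?mulNmx ?mxII ?opprK ?AN1 ?AN2 ?AN3 ?BN1 ?BN2 ?BN3 ?opprK.
lra.
Qed.

Lemma lin_I a (Y Y' : V) : (a *: Y + Y') *m I0 = a *: (Y *m I0) + Y' *m I0.
Proof. by rewrite mulmxDl -scalemxAl. Qed.

Lemma HfLin2 X a Y Y' Z : Hf X (a *: Y + Y') Z = a * Hf X Y Z + Hf X Y' Z.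
Proof.
rewrite !HfE !lin_I ?ALin1 ?ALin2 ?ALin3 ?BLin1 ?BLin2 ?BLin3.
ring.
Qed.
Lemma HfLin3 X a Y Z Z' : Hf X Y (a *: Z + Z') = a * Hf X Y Z + Hf X Y Z'.
Proof.
rewrite !HfE !lin_I ?ALin1 ?ALin2 ?ALin3 ?BLin1 ?BLin2 ?BLin3.
ring.
Qed.
Lemma cfLin2 X a Y Y' Z : cf X (a *: Y + Y') Z = a * cf X Y Z + cf X Y' Z.
Proof. rewrite /cf ?BLin1 ?BLin2 ?BLin3; ring. Qed.
Lemma cfLin3 X a Y Z Z' : cf X Y (a *: Z + Z') = a * cf X Y Z + cf X Y Z'.
Proof. rewrite /cf ?BLin1 ?BLin2 ?BLin3; ring. Qed.

Lemma Wanti v Y Z : bil (Ww v) Y Z = - bil (Ww v) Z Y.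
Proof.
have h1 := Bsym v Y (Z *m I0).
have h2 := r2 v Y (Z *m I0).
have h3 := r3 v (Y *m I0) Z.
rewrite !WE.
rewrite ?mulNmx ?mxII ?opprK ?AN1 ?AN2 ?AN3 ?BN1 ?BN2 ?BN3 ?opprK in h1 h2 h3 *.
lra.
Qed.

Lemma HfAnti X Y Z : Hf X Y Z = - Hf X Z Y.
Proof.
rewrite /Hf /dw (Wanti (X *m - I0)) (Wanti (Y *m - I0)) (Wanti (Z *m - I0)).
lra.
Qed.

End Bismut.

Section Rep.
Variables (R : realType) (n : nat).
Local Notation V := 'rV[R]_n.

Lemma bil_evec (M : 'M[R]_n) i j : bil M (evec R i) (evec R j) = M i j.
Proof. by rewrite /bil /evec -rowE trmx_delta -colE !mxE. Qed.

Lemma bil_inj (M M' : 'M[R]_n) : (forall Y Z, bil M Y Z = bil M' Y Z) -> M = M'.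
Proof. by move=> h; apply/matrixP => i j; rewrite -!bil_evec h. Qed.

Lemma lin_expand (g : V -> R) : (forall a Y Y', g (a *: Y + Y') = a * g Y + g Y') ->
  forall Y, g Y = \sum_i Y 0 i * g (evec R i).
Proof.
move=> hg Y.
have g0 : g 0 = 0.
  have := hg 1 0 0; rewrite scale1r !addr0 mul1r => h.
  by apply: (addrI (g 0)); rewrite addr0 -h.
rewrite {1}(row_sum_delta Y).
elim/big_rec2: _ => [//|i y1 y2 _ <-].
by rewrite hg.
Qed.

Lemma bil_rep (f : V -> V -> R) :
  (forall a Y Y' Z, f (a *: Y + Y') Z = a * f Y Z + f Y' Z) ->
  (forall a Y Z Z', f Y (a *: Z + Z') = a * f Y Z + f Y Z') ->
  forall Y Z, f Y Z = bil (\matrix_(i, j) f (evec R i) (evec R j)) Y Z.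
Proof.
move=> h1 h2 Y Z.
rewrite (@lin_expand (fun Y => f Y Z)); last by move=> a Y1 Y2; exact: h1.
rewrite bilE; apply: eq_bigr => i _.
rewrite (@lin_expand (fun Z => f (evec R i) Z)); last by move=> a Y1 Y2; exact: h2.
rewrite mulr_sumr; apply: eq_bigr => j _; rewrite mxE; ring.
Qed.

Lemma sum4_tr (P P' M N : 'M[R]_n) :
  \sum_i \sum_j \sum_k \sum_l P i k * P' j l * M i j * N k l =
  \tr (P^T *m M *m P' *m N^T).
Proof.
rewrite /mxtrace.
under [RHS]eq_bigr => a _ do rewrite mxE.
under [RHS]eq_bigr => a _ do under eq_bigr => b _ do rewrite !mxE.
under [RHS]eq_bigr => a _ do under eq_bigr => b _ do rewrite mulr_suml.
under [RHS]eq_bigr => a _ do under eq_bigr => b _ do under eq_bigr => c _ do rewrite mxE mulr_suml mulr_suml.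
under [LHS]eq_bigr => i _ do rewrite exchange_big.
rewrite [LHS]exchange_big.
under [LHS]eq_bigr => k _ do rewrite exchange_big.
under [LHS]eq_bigr => k _ do under eq_bigr => j _ do rewrite exchange_big.
under [LHS]eq_bigr => k _ do rewrite exchange_big.
apply: eq_bigr => k _; apply: eq_bigr => l _; apply: eq_bigr => j _; apply: eq_bigr => i _.
rewrite !mxE; ring.
Qed.

End Rep.

Section Final.
Variables (R : realType) (n : nat).
Local Notation V := 'rV[R]_n.
Variables (G0 I0 J0 : 'M[R]_n) (DG DI DJ : V -> 'M[R]_n).
Hypothesis hG : G0^T = G0.
Hypothesis hI2 : I0 *m I0 = - 1%:M.
Hypothesis hIG : I0 *m G0 *m I0^T = G0.
Hypothesis hJ2 : J0 *m J0 = - 1%:M.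
Hypothesis hJG : J0 *m G0 *m J0^T = G0.
Hypothesis hlinI : forall (a : R) u w, DI (a *: u + w) = a *: DI u + DI w.
Hypothesis hlinJ : forall (a : R) u w, DJ (a *: u + w) = a *: DJ u + DJ w.
Hypothesis hlinG : forall (a : R) u w, DG (a *: u + w) = a *: DG u + DG w.
Hypothesis hDGs : forall v, (DG v)^T = DG v.
Hypothesis hD2I : forall v, DI v *m I0 + I0 *m DI v = 0.
Hypothesis hD3I : forall v, DI v *m G0 *m I0^T + I0 *m DG v *m I0^T + I0 *m G0 *m (DI v)^T = DG v.
Hypothesis hNI : forall X Y : V, Y *m DI (X *m I0) - X *m DI (Y *m I0)
   + X *m DI Y *m I0 - Y *m DI X *m I0 = 0.
Hypothesis hD2J : forall v, DJ v *m J0 + J0 *m DJ v = 0.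
Hypothesis hD3J : forall v, DJ v *m G0 *m J0^T + J0 *m DG v *m J0^T + J0 *m G0 *m (DJ v)^T = DG v.
Hypothesis hNJ : forall X Y : V, Y *m DJ (X *m J0) - X *m DJ (Y *m J0)
   + X *m DJ Y *m J0 - Y *m DJ X *m J0 = 0.
Hypothesis hGu : G0 \in unitmx.
Hypothesis hSu : (I0 + J0) \in unitmx.
Hypothesis hH : forall X0 X1 X2, Hf R n G0 I0 DG DI X0 X1 X2 = - Hf R n G0 J0 DG DJ X0 X1 X2.

Lemma final_id (X : V) :
  \tr ((DI X + DJ X) *m invmx (I0 + J0)) =
  -2 * ip2 G0 (fun Xs => - bil G0 (Xs ord0 *m (I0 - J0) *m invmx (I0 + J0)) (Xs ord_max))
              (fun Xs => Hf R n G0 I0 DG DI X (Xs ord0) (Xs ord_max)).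
Proof.
pose MH := \matrix_(i, j) Hf R n G0 I0 DG DI X (evec R i) (evec R j).
pose MC := \matrix_(i, j) cf R n DG X (evec R i) (evec R j).
have HMH : forall Y Z, Hf R n G0 I0 DG DI X Y Z = bil MH Y Z.
  apply: bil_rep => *; [exact: (HfLin2 _ _ _ _ _ _ hI2 hlinI hlinG) | exact: (HfLin3 _ _ _ _ _ _ hI2 hlinI hlinG)].
have HMC : forall Y Z, cf R n DG X Y Z = bil MC Y Z.
  apply: bil_rep => *; [exact: (cfLin2 _ _ _ hlinG) | exact: (cfLin3 _ _ _ hlinG)].
have HMHJ : forall Y Z, Hf R n G0 J0 DG DJ X Y Z = bil (- MH) Y Z.
  by move=> Y Z; rewrite bilNm -HMH hH opprK.
have PI : DI X *m G0 = 2^-1 *: (I0 *m MH + MH *m I0^T) - (I0 *m MC + MC *m I0^T).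
  apply: bil_inj => Y Z.
  have := bismut R n G0 I0 DG DI hG hI2 hIG hlinI hlinG hD2I hD3I hNI X Y Z.
  rewrite /Aa => ->.
  rewrite !HMH !HMC bilDm bilNm bilZm !bilDm !bilMr ?bilMl.
  lra.
have PJ : DJ X *m G0 = 2^-1 *: (J0 *m (- MH) + (- MH) *m J0^T) - (J0 *m MC + MC *m J0^T).
  apply: bil_inj => Y Z.
  have := bismut R n G0 J0 DG DJ hG hJ2 hJG hlinJ hlinG hD2J hD3J hNJ X Y Z.
  rewrite /Aa => ->.
  rewrite !HMHJ !HMC ?bilDm ?bilNm ?bilZm ?bilDm ?bilNm ?bilMr ?bilMl ?bilNm.
  lra.
set S := I0 + J0.
set D := I0 - J0.
set Gi := invmx G0.
set Si := invmx S.
have hGi1 : G0 *m Gi = 1%:M by rewrite mulmxV.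
have hGi2 : Gi *m G0 = 1%:M by rewrite mulVmx.
have hS1 : S *m Si = 1%:M by rewrite mulmxV.
have hS2 : Si *m S = 1%:M by rewrite mulVmx.
have PS : (DI X + DJ X) *m G0 = 2^-1 *: (D *m MH + MH *m D^T) - (S *m MC + MC *m S^T).
  rewrite mulmxDl PI PJ; apply: bil_inj => Y Z.
  rewrite /D /S !linearD /= ?linearN /= .
  rewrite ?bilDm ?bilNm ?bilZm ?bilDm ?bilNm ?bilMr ?bilMl ?bilNm.
  rewrite ?mulmxDr ?mulmxN ?bilDl ?bilNl ?bilDr ?bilNr ?bilNm.
  lra.
have tI : I0^T = - (Gi *m I0 *m G0).
  rewrite -[I0^T]mul1mx -hGi2 -[LHS]mulmxA -[G0 *m I0^T]opprK -(IG R n G0 I0 hI2 hIG).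
  by rewrite mulmxN mulmxA.
have tJ : J0^T = - (Gi *m J0 *m G0).
  rewrite -[J0^T]mul1mx -hGi2 -[LHS]mulmxA -[G0 *m J0^T]opprK -(IG R n G0 J0 hJ2 hJG).
  by rewrite mulmxN mulmxA.
have tD : D^T *m Gi = - (Gi *m D).
  rewrite /D linearB /= tI tJ mulmxDl !mulNmx -!mulmxA hGi1 !mulmx1.
  by rewrite mulmxDr mulmxN opprK opprB addrC.
have tS : S^T *m Gi = - (Gi *m S).
  rewrite /S linearD /= tI tJ mulmxDl !mulNmx -!mulmxA hGi1 !mulmx1.
  by rewrite mulmxDr opprD.
have SD : S *m D = - (D *m S).
  apply: bil_inj => Y Z.
  rewrite /S /D ?mulmxDl ?mulmxDr ?mulmxN ?mulNmx ?mulmxN hI2 hJ2.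
  rewrite ?bilDm ?bilNm ?bilDm ?bilNm.
  lra.
have DSi : D *m Si = - (Si *m D).
  have := congr1 (fun M => Si *m M *m Si) SD; rewrite /=.
  by rewrite mulmxA hS2 mul1mx mulmxN mulNmx -!mulmxA hS1 mulmx1.
rewrite -[DI X + DJ X](mulmxK hGu) -/Gi PS.
have GiT : Gi^T = Gi by rewrite /Gi trmx_inv hG.
clearbody S D Si.
pose T0 := \tr (MH *m Gi *m Si *m D).
pose TC := \tr (MC *m Gi).
have t1 : \tr (D *m MH *m Gi *m Si) = T0.
  by rewrite -!mulmxA mxtrace_mulC !mulmxA.
have t2 : \tr (MH *m D^T *m Gi *m Si) = T0.
  rewrite -(mulmxA MH) tD mulmxN mulNmx linearN /= -!mulmxA DSi !mulmxN linearN opprK /=.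
  by rewrite !mulmxA.
have t3 : \tr (S *m MC *m Gi *m Si) = TC.
  by rewrite -!mulmxA mxtrace_mulC -!mulmxA hS2 mulmx1.
have t4 : \tr (MC *m S^T *m Gi *m Si) = - TC.
  by rewrite -(mulmxA MC) tS mulmxN mulNmx linearN /= -!mulmxA hS1 mulmx1.
rewrite !mulmxDl !mulNmx !mulmxDl -!scalemxAl !mulmxDl !linearD /= !linearN /= !linearZ /=.
rewrite t1 t2 t3 t4.
pose MB := - (D *m Si *m G0).
have hb : forall i j, - bil G0 (pair2 (evec R i) (evec R j) ord0 *m D *m Si)
      (pair2 (evec R i) (evec R j) ord_max) = MB i j.
  by move=> i j; rewrite /pair2 /= /MB -bil_evec bilNm bilMl mulmxA.
have hc : forall k l, Hf R n G0 I0 DG DI X (pair2 (evec R k) (evec R l) ord0)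
      (pair2 (evec R k) (evec R l) ord_max) = MH k l.
  by move=> k l; rewrite /pair2 /= mxE.
rewrite /ip2.
under eq_bigr do under eq_bigr do under eq_bigr do under eq_bigr do rewrite hb hc.
rewrite sum4_tr.
have MHT : MH^T = - MH.
  apply/matrixP => i j; rewrite !mxE.
  exact: (HfAnti R n G0 I0 DG DI hG hI2 hIG hDGs hD2I hD3I).
have t5 : \tr (Gi *m MB *m Gi *m - MH) = - T0.
  rewrite /MB !mulmxN !mulNmx opprK !mulmxA -(mulmxA _ G0 Gi) hGi1 mulmx1.
  rewrite mxtrace_mulC -(mulmxA Gi D Si) DSi !mulmxN linearN /=.
  by rewrite !mulmxA.
rewrite -/Gi GiT MHT t5.
lra.
Qed.

End Final.

Set Implicit Arguments.
Unset Strict Implicit.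

Definition k1 : 'I_3 := lift ord0 ord0.
Definition k2 : 'I_3 := lift ord0 (lift ord0 (ord0 : 'I_1)).

Section Glue.
Variables (R : realType) (n : nat).
Local Notation V := 'rV[R]_n.

Lemma invI (A : 'M[R]_n) : A *m A = - 1%:M -> invmx A = - A.
Proof.
move=> h.
have hu : A *m (- A) = 1%:M by rewrite mulmxN h opprK.
have uA : A \in unitmx by case: (mulmx1_unit hu).
by rewrite -[invmx A]mulmx1 -hu mulmxA mulVmx // mul1mx.
Qed.

Variables (U : set V) (G I : V -> 'M[R]_n) (x : V).
Hypothesis oU : open U.
Hypothesis Ux : U x.
Hypothesis sG : smooth_mx_on U G.
Hypothesis sI : smooth_mx_on U I.
Hypothesis hIG : forall y, U y -> I y *m G y *m (I y)^T = G y.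

Lemma nearU (P : V -> Prop) : (forall y, U y -> P y) -> \forall y \near x, P y.
Proof.
move=> HP; have nU : \forall y \near x, U y by exact: open_nbhs_nbhs.
by apply: filterS nU.
Qed.

Lemma ddiff_of (F : V -> 'M[R]_n) : smooth_mx_on U F -> ddiff F x.
Proof. by move=> sF i j; exact: (sF i j [::] x Ux). Qed.

Lemma dable_of (F : V -> 'M[R]_n) v : smooth_mx_on U F -> dable F x v.
Proof. by move=> sF i j; apply: diff_derivable; exact: (ddiff_of sF). Qed.

Lemma omega_der (Zs : 'I_2 -> V) v :
  derive (fun y => form_act I (omega G I) y Zs) x v =
  bil (Ww R n (G x) (I x) (fun w => Dm G w x) (fun w => Dm I w x) v) (Zs ord0) (Zs ord_max).
Proof.
rewrite (@near_eq_derive _ _ _ _ (fun y => bil (I y *m G y) (Zs ord0) (Zs ord_max))); last first.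
  apply: nearU => y Uy.
  rewrite /form_act /omega /app -bilMr -!bilMl.
  by rewrite (mulmxA (I y) (G y)) (hIG Uy).
have [d1 d2] := Dm_mul (dable_of (v := v) sI) (dable_of (v := v) sG).
have [e1 e2] := der_bil (Zs ord0) (Zs ord_max) d1.
by rewrite e2 d2 /Ww.
Qed.


Hypothesis hI2 : forall y, U y -> I y *m I y = - 1%:M.

Lemma dcE (Xs : 'I_3 -> V) :
  dc I (omega G I) x Xs =
  Hf R n (G x) (I x) (fun w => Dm G w x) (fun w => Dm I w x) (Xs ord0) (Xs k1) (Xs k2).
Proof.
rewrite /dc {1}/form_act /dform.
under eq_bigr do rewrite omega_der.
rewrite !big_ord_recl big_ord0 /=.
have l1 : lift (lift ord0 ord0) (ord0 : 'I_2) = ord0 :> 'I_3 by apply: val_inj.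
have l2 : lift (lift ord0 ord0) (ord_max : 'I_2) = k2 :> 'I_3 by apply: val_inj.
have l3 : lift k2 (ord0 : 'I_2) = ord0 :> 'I_3 by apply: val_inj.
have l4 : lift k2 (ord_max : 'I_2) = k1 :> 'I_3 by apply: val_inj.
have l5 : lift ord0 (ord_max : 'I_2) = k2 :> 'I_3 by apply: val_inj.
have b1 : bump 0 0 = 1%N by [].
have b2 : bump 0 (bump 0 0) = 2%N by [].
rewrite l1 l2 -/k2 l3 l4 l5 -/k1 b1 b2 /app (invI (hI2 Ux)) /Hf /dw.
rewrite expr0 expr1 sqrrN expr1n !mul1r mulN1r addr0 addrA.
by [].
Qed.

End Glue.

Lemma unit_of_inj (R : realType) (n : nat) (A : 'M[R]_n) :
  (forall v : 'rV[R]_n, v *m A = 0 -> v = 0) -> A \in unitmx.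
Proof.
move=> h; rewrite -row_free_unit -kermx_eq0; apply/eqP/row_matrixP => i.
by rewrite row0; apply: h; rewrite -row_mul mulmx_ker row0.
Qed.

Theorem main_gen (R : realType) (n : nat) (U : set 'rV[R]_n)
  (G I J : 'rV[R]_n -> 'M[R]_n) :
  gen_kahler_on U G I J ->
  (forall x, U x -> \det (I x + J x) != 0) ->
  forall (x X : 'rV[R]_n), U x ->
    derive (fun y => ln (\det (I y + J y))) x X =
    - 2 * ip2 (G x) (bform G I J x) (contr X (dc I (omega G I)) x).
Proof.
move=> [oU [[sG [Gsym Gpos]] [[sI [I2 [NI hermI]]] [[sJ [J2 [NJ hermJ]]] [HIJ _]]]]] detnz x X Ux.
have hIG : forall y, U y -> I y *m G y *m (I y)^T = G y.
  move=> y Uy; apply: bil_inj => Y Z; rewrite bilMr bilMl; exact: hermI.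
have hJG : forall y, U y -> J y *m G y *m (J y)^T = G y.
  move=> y Uy; apply: bil_inj => Y Z; rewrite bilMr bilMl; exact: hermJ.
have dG : forall v, dable G x v by move=> v; exact: (dable_of Ux sG).
have dI : forall v, dable I x v by move=> v; exact: (dable_of Ux sI).
have dJ : forall v, dable J x v by move=> v; exact: (dable_of Ux sJ).
have hlinI : forall (a : R) u w, Dm I (a *: u + w) x = a *: Dm I u x + Dm I w x.
  by move=> a u w; apply: Dm_lin; exact: (ddiff_of Ux sI).
have hlinJ : forall (a : R) u w, Dm J (a *: u + w) x = a *: Dm J u x + Dm J w x.
  by move=> a u w; apply: Dm_lin; exact: (ddiff_of Ux sJ).
have hlinG : forall (a : R) u w, Dm G (a *: u + w) x = a *: Dm G u x + Dm G w x.
  by move=> a u w; apply: Dm_lin; exact: (ddiff_of Ux sG).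
have hDGs : forall v, (Dm G v x)^T = Dm G v x.
  move=> v; rewrite -(Dm_tr (dG v)).2; apply: Dm_near.
  by apply: (nearU oU Ux) => y Uy; rewrite Gsym.
have hD2 : forall (K : 'rV[R]_n -> 'M[R]_n), (forall v, dable K x v) ->
    (forall y, U y -> K y *m K y = - 1%:M) ->
    forall v, Dm K v x *m K x + K x *m Dm K v x = 0.
  move=> K dK K2 v; rewrite -(Dm_mul (dK v) (dK v)).2.
  rewrite (Dm_near (B := fun _ => - 1%:M)); first exact: (Dm_cst _ _ _).2.
  by apply: (nearU oU Ux) => y Uy; rewrite K2.
have hD3 : forall (K : 'rV[R]_n -> 'M[R]_n), (forall v, dable K x v) ->
    (forall y, U y -> K y *m G y *m (K y)^T = G y) ->
    forall v, Dm K v x *m G x *m (K x)^T + K x *m Dm G v x *m (K x)^T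
              + K x *m G x *m (Dm K v x)^T = Dm G v x.
  move=> K dK KG v.
  have [m1 m2] := Dm_mul (dK v) (dG v).
  have [t1 t2] := Dm_tr (dK v).
  have [_ m4] := Dm_mul m1 t1.
  rewrite -[RHS](Dm_near (A := fun y => K y *m G y *m (K y)^T) (B := G) v); last first.
    by apply: (nearU oU Ux) => y Uy; rewrite KG.
  by rewrite m4 m2 t2 mulmxDl.
have hGu : G x \in unitmx.
  apply: unit_of_inj => v vG; apply/eqP; apply/negP => /negP vn0.
  have := Gpos x v Ux vn0; rewrite /bil vG mul0mx mxE.
  by rewrite ltxx.
have hSu : (I x + J x) \in unitmx by rewrite unitmxE unitfE; exact: detnz.
have hdcI := dcE oU Ux sG sI hIG I2.
have hdcJ := dcE oU Ux sG sJ hJG J2.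
have hH : forall X0 X1 X2,
    Hf R n (G x) (I x) (fun w => Dm G w x) (fun w => Dm I w x) X0 X1 X2 =
    - Hf R n (G x) (J x) (fun w => Dm G w x) (fun w => Dm J w x) X0 X1 X2.
  move=> X0 X1 X2.
  pose Xs : 'I_3 -> 'rV[R]_n := fun k => if k == ord0 then X0 else if k == k1 then X1 else X2.
  have := HIJ x Xs Ux; rewrite hdcI hdcJ.
  by rewrite /Xs /=.
have cE : contr X (dc I (omega G I)) x =
    fun Xs => Hf R n (G x) (I x) (fun w => Dm G w x) (fun w => Dm I w x) X (Xs ord0) (Xs ord_max).
  apply: funext => Xs; rewrite /contr hdcI /k1 /k2 !liftK unlift_none.
  by have -> : (lift ord0 ord0 : 'I_2) = ord_max by apply: val_inj.
rewrite cE.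
have dS : forall v, dable (fun y => I y + J y) x v.
  by move=> v; exact: (Dm_add (dI v) (dJ v)).1.
have [dd1 dd2] := der_det (dS X).
have dpos : 0 < \det (I x + J x).
  apply: det_pos_of; last exact: detnz.
  move=> t t0; rewrite -unitfE -unitmxE; apply: unit_of_inj => v hv.
  have anti : forall K : 'rV[R]_n -> 'M[R]_n, (forall y, U y -> K y *m K y = - 1%:M) ->
      (forall y, U y -> K y *m G y *m (K y)^T = G y) -> bil (K x *m G x) v v = 0.
    move=> K K2 KG.
    have e := IG R n (G x) (K x) (K2 x Ux) (KG x Ux).
    have h1 : bil (K x *m G x) v v = - bil (G x *m (K x)^T) v v by rewrite e bilNm.
    have h2 : bil (G x *m (K x)^T) v v = bil (K x *m G x) v v.
      by rewrite -{1}(Gsym x Ux) -trmx_mul bil_tr.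
    lra.
  have hvS : v *m (I x + J x) = - (t *: v).
    by apply/eqP; rewrite -addr_eq0 -mul_mx_scalar -mulmxDr hv.
  have : bil ((I x + J x) *m G x) v v = - t * bil (G x) v v.
    by rewrite bilMl hvS bilNl bilZl mulNr.
  rewrite mulmxDl bilDm (anti I I2 hIG) (anti J J2 hJG) addr0 => h0.
  have g0 : bil (G x) v v = 0.
    apply/eqP; move/eqP: h0; rewrite eq_sym mulf_eq0 oppr_eq0 gt_eqF //=.
  apply/eqP; apply/negP => /negP vn0.
  by have := Gpos x v Ux vn0; rewrite g0 ltxx.
rewrite (der_ln dd1 dpos) dd2 (Dm_add (dI X) (dJ X)).2.
have adjE : \adj (I x + J x) = \det (I x + J x) *: invmx (I x + J x).
  by rewrite -[\adj _]mul1mx -(mulVmx hSu) -mulmxA mul_mx_adj mul_mx_scalar.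
rewrite adjE -scalemxAr linearZ /= mulrAC mulfV ?mul1r; last by rewrite gt_eqF.
exact: (final_id R n (G x) (I x) (J x) (fun w => Dm G w x) (fun w => Dm I w x) (fun w => Dm J w x)
  (Gsym x Ux) (I2 x Ux) (hIG x Ux) (J2 x Ux) (hJG x Ux) hlinI hlinJ hlinG hDGs
  (hD2 I dI I2) (hD3 I dI hIG) (fun X Y => NI x X Y Ux)
  (hD2 J dJ J2) (hD3 J dJ hJG) (fun X Y => NJ x X Y Ux) hGu hSu hH X).
Qed.

Theorem lemma2p13 (R : realType) (m : nat) (U : set 'rV[R]_(2 * m))
  (G I J : 'rV[R]_(2 * m) -> 'M[R]_(2 * m)) :
  gen_kahler_on U G I J ->
  (forall x, U x -> \det (I x + J x) != 0) ->
  forall (x X : 'rV[R]_(2 * m)), U x ->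
    derive (fun y => ln (\det (I y + J y))) x X =
    - 2 * ip2 (G x) (bform G I J x) (contr X (dc I (omega G I)) x).
Proof. exact: main_gen. Qed.
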